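(* Assume that for each $l\in PC$ the map $h_l(\rho)=\sigma_l\rho\sigma_l^*/\operatorname{tr}(\sigma_l\rho\sigma_l^* )$ is a polynomial of degree at most one. Then the infinitesimal generator $\mathcal{A}$ maps polynomials to polynomials: if $w(t,\rho)$ is a polynomial (in $t$ and the real and imaginary parts of the entries of $\rho$), then $\mathcal{A}w(t,\rho,u)$ is a polynomial in $(t,\rho,u)$.
   Context: Fix integers $n\ge 1$, $K\ge 1$, $L\ge 0$. Let $H_0,\dots,H_K\in\mathbb{C}^{n\times n}$ be Hermitian and for $u\in\mathbb{R}^K$ set $H(u)=H_0+\sum_{k=1}^K u_kH_k$. Let $\sigma_1,\dots,\sigma_L\in\mathbb{C}^{n\times n}$ and partition $\{1,\dots,L\}=HD\sqcup PC$. $A^*$ is the conjugate transpose, $[A,C]=AC-CA$, $\{A,C\}=AC+CA$. Define $\mathcal{L}(u)\rho=-i[H(u),\rho]+\sum_{l=1}^L\big(\sigma_l\rho\sigma_l^*-\tfrac12\{\sigma_l^*\sigma_l,\rho\}\big)$; for $l\in HD$: $\mathcal{G}_l\rho=\sigma_l\rho+\rho\sigma_l^*-\operatorname{tr}(\sigma_l\rho+\rho\sigma_l^* )\rho$; for $l\in PC$: $\lambda_l(\rho)=\operatorname{tr}(\sigma_l\rho\sigma_l^* )$, $h_l(\rho)=\sigma_l\rho\sigma_l^*/\lambda_l(\rho)$, $\mathcal{L}_l\rho=\sigma_l\rho\sigma_l^*-\lambda_l(\rho)\rho$; and $\tilde{\mathcal{L}}(u)=\mathcal{L}(u)-\sum_{l\in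 PC}\mathcal{L}_l$. The infinitesimal generator of the quantum filtering equation $d\rho_t=\mathcal{L}(u_t)\rho_t\,dt+\sum_{l\in HD}\mathcal{G}_l\rho_t\,dw^l_t+\sum_{l\in PC}[(h_l(\rho_t)-\rho_t)dn^l_t-\mathcal{L}_l\rho_t\,dt]$ acts on smooth $w(t,\rho)$ by $\mathcal{A}w(t,\rho,u)=\frac{\partial w}{\partial t}(t,\rho)+\langle\tilde{\mathcal{L}}(u)\rho,\nabla_\rho w(t,\rho)\rangle+\frac12\sum_{l\in HD}\langle\mathcal{G}_l\rho,\nabla^2_\rho w(t,\rho)\,\mathcal{G}_l\rho\rangle+\sum_{l\in PC}\lambda_l(\rho)\big(w(t,h_l(\rho))-w(t,\rho)\big)$, where $\langle\cdot,\cdot\rangle$ is the real inner product on Hermitian matrices with respect to which $\nabla_\rho$ and $\nabla^2_\rho$ are taken. A polynomial in $\rho$ means a real-coefficient polynomial jointly in the entries of $\operatorname{Re}\rho$ and $\operatorname{Im}\rho$; matrix-valued maps are polynomial if all components are. *)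

(* Defs.v *)
From mathcomp Require Import all_boot all_algebra.
From mathcomp Require Import complex.
From mathcomp Require Import all_classical all_reals all_analysis.
Set Implicit Arguments. Unset Strict Implicit. Unset Printing Implicit Defensive.
Import GRing.Theory Num.Theory.
Local Open Scope ring_scope.

Section QF.
Variable R : realType.
Local Notation C := (R[i]).

Inductive polyfun (X I : Type) (c : I -> X -> R) : (X -> R) -> Prop :=
| PF_coord i : polyfun c (c i)
| PF_const a : polyfun c (fun _ => a)
| PF_add f g : polyfun c f -> polyfun c g -> polyfun c (fun x => f x + g x)
| PF_mul f g : polyfun c f -> polyfun c g -> polyfun c (fun x => f x * g x).

Inductive affinefun (X I : Type) (c : I -> X -> R) : (X -> R) -> Prop :=
| AF_coord i : affinefun c (c i)
| AF_const a : affinefun c (fun _ => a)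
| AF_add f g : affinefun c f -> affinefun c g -> affinefun c (fun x => f x + g x)
| AF_scale a f : affinefun c f -> affinefun c (fun x => a * f x).

Definition mat_coord n (k : 'I_n * 'I_n * bool) (rho : 'M[C]_n) : R :=
  let: (i, j, b) := k in
  if b then complex.Re (rho i j) else complex.Im (rho i j).

Definition tr_coord n (k : unit + ('I_n * 'I_n * bool)) (x : R * 'M[C]_n) : R :=
  match k with inl _ => x.1 | inr k' => mat_coord k' x.2 end.

Definition tru_coord n K (k : (unit + ('I_n * 'I_n * bool)) + 'I_K)
    (x : (R * 'M[C]_n) * ('I_K -> R)) : R :=
  match k with inl k' => tr_coord k' x.1 | inr k' => x.2 k' end.

Definition affine_mx n (P : 'M[C]_n -> 'M[C]_n) : Prop :=
  forall i j, affinefun (@mat_coord n) (fun rho => complex.Re (P rho i j)) /\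
              affinefun (@mat_coord n) (fun rho => complex.Im (P rho i j)).

Definition adj m p (A : 'M[C]_(m, p)) : 'M[C]_(p, m) := \matrix_(i, j) (A j i)^*.
Definition is_hermitian n (A : 'M[C]_n) : Prop := adj A = A.
Definition is_density n (rho : 'M[C]_n) : Prop :=
  is_hermitian rho /\ \tr rho = 1 /\
  forall v : 'cV[C]_n, 0 <= (adj v *m rho *m v) ord0 ord0.

Definition comm n (A B : 'M[C]_n) := A *m B - B *m A.
Definition acomm n (A B : 'M[C]_n) := A *m B + B *m A.

Definition Hu n K (H0 : 'M[C]_n) (H : 'I_K -> 'M[C]_n) (u : 'I_K -> R) :=
  H0 + \sum_(k < K) ((u k)%:C)%C *: H k.

Definition Lgen n K L (H0 : 'M[C]_n) (H : 'I_K -> 'M[C]_n) (sigma : 'I_L -> 'M[C]_n)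
    (u : 'I_K -> R) (rho : 'M[C]_n) : 'M[C]_n :=
  - 'i *: comm (Hu H0 H u) rho +
  \sum_(l < L) (sigma l *m rho *m adj (sigma l)
                 - 2%:R^-1 *: acomm (adj (sigma l) *m sigma l) rho).

Definition Gop n (s rho : 'M[C]_n) : 'M[C]_n :=
  s *m rho + rho *m adj s - \tr (s *m rho + rho *m adj s) *: rho.
Definition lam n (s rho : 'M[C]_n) : C := \tr (s *m rho *m adj s).
Definition hmap n (s rho : 'M[C]_n) : 'M[C]_n := (lam s rho)^-1 *: (s *m rho *m adj s).
Definition Ljump n (s rho : 'M[C]_n) : 'M[C]_n := s *m rho *m adj s - lam s rho *: rho.

Definition Ltilde n K L (H0 : 'M[C]_n) (H : 'I_K -> 'M[C]_n) (sigma : 'I_L -> 'M[C]_n)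
    (PC : {set 'I_L}) (u : 'I_K -> R) (rho : 'M[C]_n) : 'M[C]_n :=
  Lgen H0 H sigma u rho - \sum_(l in PC) Ljump (sigma l) rho.

(** <X, grad f(rho)> and <X, Hess f(rho) X>, as first and second directional
    derivatives along the real line s |-> rho + s X. *)
Definition dderiv n (f : 'M[C]_n -> R) (rho X : 'M[C]_n) : R :=
  derive1 (fun s : R => f (rho + (s%:C)%C *: X)) 0.
Definition dderiv2 n (f : 'M[C]_n -> R) (rho X : 'M[C]_n) : R :=
  derive1 (derive1 (fun s : R => f (rho + (s%:C)%C *: X))) 0.

(** The infinitesimal generator A w (t, rho, u); HD is the complement of PC. *)
Definition gen n K L (H0 : 'M[C]_n) (H : 'I_K -> 'M[C]_n) (sigma : 'I_L -> 'M[C]_n)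
    (PC : {set 'I_L}) (w : R -> 'M[C]_n -> R) (t : R) (rho : 'M[C]_n)
    (u : 'I_K -> R) : R :=
  derive1 (fun s : R => w s rho) t
  + dderiv (w t) rho (Ltilde H0 H sigma PC u rho)
  + 2%:R^-1 * \sum_(l in ~: PC) dderiv2 (w t) rho (Gop (sigma l) rho)
  + \sum_(l in PC) complex.Re (lam (sigma l) rho)
                   * (w t (hmap (sigma l) rho) - w t rho).

End QF.

(* Main.v *)
Require Import Defs.
From mathcomp Require Import all_boot all_algebra.
From mathcomp Require Import complex.
From mathcomp Require Import all_classical all_reals all_analysis.
Import GRing.Theory Num.Theory.
Local Open Scope ring_scope.

Section G.
Variable R : realType.
Variables (Y I : Type) (d : I -> Y -> R).
Local Notation PF := (@polyfun R Y I d).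

Lemma pf_ext g f : (forall y, f y = g y) -> PF g -> PF f.
Proof. by move=> e; have -> : f = g by apply: funext. Qed.

Lemma pf_cst a : PF (fun _ => a). Proof. exact: PF_const. Qed.

Lemma pf_add f g : PF f -> PF g -> PF (fun y => f y + g y).
Proof. exact: PF_add. Qed.
Lemma pf_mul f g : PF f -> PF g -> PF (fun y => f y * g y).
Proof. exact: PF_mul. Qed.

Lemma pf_opp f : PF f -> PF (fun y => - f y).
Proof.
move=> hf; apply: (pf_ext (fun y => (-1) * f y)); first by move=> y; rewrite mulN1r.
by apply: pf_mul => //; apply: pf_cst.
Qed.

Lemma pf_sub f g : PF f -> PF g -> PF (fun y => f y - g y).
Proof. by move=> hf hg; apply: pf_add => //; apply: pf_opp. Qed.

Lemma pf_sum_seq (J : Type) (r : seq J) (P : pred J) F :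
  (forall j, PF (F j)) -> PF (fun y => \sum_(j <- r | P j) F j y).
Proof.
move=> hF; elim: r => [|a r IH].
  by apply: (pf_ext (fun _ => 0)) => [y|]; [rewrite big_nil|apply: pf_cst].
case Pa: (P a).
  apply: (pf_ext (fun y => F a y + \sum_(j <- r | P j) F j y)).
    by move=> y; rewrite big_cons Pa.
  exact: pf_add.
by apply: (pf_ext (fun y => \sum_(j <- r | P j) F j y)) => // y; rewrite big_cons Pa.
Qed.

Lemma pf_sum (J : finType) (P : pred J) F :
  (forall j, PF (F j)) -> PF (fun y => \sum_(j | P j) F j y).
Proof. exact: pf_sum_seq. Qed.

Lemma pf_natmul f m : PF f -> PF (fun y => f y *+ m).
Proof.
move=> hf; apply: (pf_ext (fun y => f y * m%:R)); first by move=> y; rewrite mulr_natr.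
by apply: pf_mul => //; apply: pf_cst.
Qed.

Lemma pf_exp f m : PF f -> PF (fun y => f y ^+ m).
Proof.
move=> hf; elim: m => [|m IH].
  by apply: (pf_ext (fun _ => 1)) => [y|]; [rewrite expr0|apply: pf_cst].
by apply: (pf_ext (fun y => f y * f y ^+ m)) => [y|]; [rewrite exprS|apply: pf_mul].
Qed.

Definition polyP (Q : Y -> {poly R}) N :=
  (forall y, (size (Q y) <= N)%N) /\ forall k, PF (fun y => (Q y)`_k).

Lemma pP_horner Q N e : polyP Q N -> PF e -> PF (fun y => (Q y).[e y]).
Proof.
move=> [hs hc] he.
apply: (pf_ext (fun y => \sum_(i < N) (Q y)`_i * e y ^+ i)).
  by move=> y; rewrite (horner_coef_wide _ (hs y)).
by apply: pf_sum => i; apply: pf_mul => //; apply: pf_exp.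
Qed.

Lemma pP_deriv Q N : polyP Q N -> polyP (fun y => (Q y)^`()) N.
Proof.
move=> [hs hc]; split.
  move=> y; have [->|nz] := eqVneq (Q y) 0; first by rewrite deriv0 size_poly0.
  exact: leq_trans (ltnW (lt_size_deriv nz)) (hs y).
move=> k; apply: (pf_ext (fun y => (Q y)`_k.+1 *+ k.+1)).
  by move=> y; rewrite coef_deriv.
exact: pf_natmul.
Qed.

Lemma pP_add Q1 Q2 N1 N2 : polyP Q1 N1 -> polyP Q2 N2 ->
  polyP (fun y => Q1 y + Q2 y) (maxn N1 N2).
Proof.
move=> [hs1 hc1] [hs2 hc2]; split.
  move=> y; apply: leq_trans (size_polyD _ _) _.
  by rewrite geq_max !leq_max hs1 hs2 orbT.
move=> k; apply: (pf_ext (fun y => (Q1 y)`_k + (Q2 y)`_k)).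
  by move=> y; rewrite coefD.
exact: pf_add.
Qed.

Lemma pP_mul Q1 Q2 N1 N2 : polyP Q1 N1 -> polyP Q2 N2 ->
  polyP (fun y => Q1 y * Q2 y) (N1 + N2).
Proof.
move=> [hs1 hc1] [hs2 hc2]; split.
  move=> y; apply: leq_trans (size_polyMleq _ _) _.
  exact: leq_trans (leq_pred _) (leq_add (hs1 y) (hs2 y)).
move=> k; apply: (pf_ext (fun y => \sum_(j < k.+1) (Q1 y)`_j * (Q2 y)`_(k - j))).
  by move=> y; rewrite coefM.
by apply: pf_sum => j; apply: pf_mul.
Qed.

Lemma pP_const a : PF a -> polyP (fun y => (a y)%:P) 1.
Proof.
move=> ha; split; first by move=> y; exact: size_polyC_leq1.
case=> [|k].
  by apply: (pf_ext (a)) => // y; rewrite coefC.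
by apply: (pf_ext (fun _ => 0)) => [y|]; [rewrite coefC|apply: pf_cst].
Qed.

Lemma pP_X : polyP (fun y => 'X) 2.
Proof.
split; first by move=> y; rewrite size_polyX.
move=> k; apply: (pf_ext (fun _ => (k == 1%N)%:R)).
  by move=> y; rewrite coefX.
exact: pf_cst.
Qed.

Lemma pP_lin a b : PF a -> PF b -> polyP (fun y => (a y)%:P + (b y)%:P * 'X) (maxn 1 (1 + 2)).
Proof.
move=> ha hb; apply: pP_add; first exact: pP_const.
apply: pP_mul; [exact: pP_const | exact: pP_X].
Qed.

Lemma pf_comp (X J : Type) (c : J -> X -> R) f (phi : Y -> X) :
  polyfun c f -> (forall j, PF (fun y => c j (phi y))) -> PF (fun y => f (phi y)).
Proof.
move=> hf hc; elim: hf => [j|a|f1 g1 _ h1 _ h2|f1 g1 _ h1 _ h2].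
- exact: hc.
- exact: pf_cst.
- exact: pf_add.
- exact: pf_mul.
Qed.

Lemma poly_comp (X J : Type) (c : J -> X -> R) f
  (gam : Y -> R -> X) (Gam : J -> Y -> {poly R}) M :
  polyfun c f -> (forall j, polyP (Gam j) M) ->
  (forall j y s, c j (gam y s) = (Gam j y).[s]) ->
  exists Q N, polyP Q N /\ forall y s, f (gam y s) = (Q y).[s].
Proof.
move=> hf hG he; elim: hf => [j|a|f1 g1 _ [Q1 [N1 [h1 e1]]] _ [Q2 [N2 [h2 e2]]]
                                 |f1 g1 _ [Q1 [N1 [h1 e1]]] _ [Q2 [N2 [h2 e2]]]].
- by exists (Gam j), M; split.
- exists (fun _ => a%:P), 1%N; split; first exact: (@pP_const (fun _ => a) (pf_cst a)).
  by move=> y s; rewrite hornerC.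
- exists (fun y => Q1 y + Q2 y), (maxn N1 N2); split; first exact: pP_add.
  by move=> y s; rewrite hornerD e1 e2.
- exists (fun y => Q1 y * Q2 y), (N1 + N2)%N; split; first exact: pP_mul.
  by move=> y s; rewrite hornerM e1 e2.
Qed.

End G.

Lemma aff_poly (R : realType) (X J : Type) (c : J -> X -> R) f :
  affinefun c f -> polyfun c f.
Proof.
elim=> [j|a|f1 g1 _ h1 _ h2|a f1 _ h1].
- exact: PF_coord.
- exact: PF_const.
- exact: PF_add.
- by apply: PF_mul => //; apply: PF_const.
Qed.
Arguments pf_ext {R Y I d}.
Arguments pf_cst {R Y I d}.
Arguments pP_horner {R Y I d Q N e}.
Arguments pP_deriv {R Y I d Q N}.
Section Cx.
Variable R : realType.
Local Notation C := (R[i]).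
Lemma ReM (x y : C) : complex.Re (x * y) = complex.Re x * complex.Re y - complex.Im x * complex.Im y.
Proof. by case: x => a b; case: y => c e. Qed.
Lemma ImM (x y : C) : complex.Im (x * y) = complex.Re x * complex.Im y + complex.Im x * complex.Re y.
Proof. by case: x => a b; case: y => c e. Qed.
Lemma ReD (x y : C) : complex.Re (x + y) = complex.Re x + complex.Re y.
Proof. by case: x => a b; case: y => c e. Qed.
Lemma ImD (x y : C) : complex.Im (x + y) = complex.Im x + complex.Im y.
Proof. by case: x => a b; case: y => c e. Qed.
Lemma ReN (x : C) : complex.Re (- x) = - complex.Re x.
Proof. by case: x. Qed.
Lemma ImN (x : C) : complex.Im (- x) = - complex.Im x.
Proof. by case: x. Qed.
Lemma ReJ (x : C) : complex.Re (x^*) = complex.Re x.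
Proof. by case: x. Qed.
Lemma ImJ (x : C) : complex.Im (x^*) = - complex.Im x.
Proof. by case: x. Qed.
Lemma ReS (x : C) : complex.Re (\sum_(j <- [::]) (fun _ : nat => x) j) = 0.
Proof. by rewrite big_nil. Qed.

Variables (Y I : Type) (d : I -> Y -> R) (n : nat).
Local Notation PF := (@polyfun R Y I d).
Definition PFc (g : Y -> C) := PF (fun y => complex.Re (g y)) /\ PF (fun y => complex.Im (g y)).
Definition PFm (M : Y -> 'M[C]_n) := forall i j, PFc (fun y => M y i j).

Lemma pfc_cst a : PFc (fun _ => a). Proof. split; exact: pf_cst. Qed.
Lemma pfc_add {f g} : PFc f -> PFc g -> PFc (fun y => f y + g y).
Proof.
move=> [h1 h2] [h3 h4]; split.
  by apply: (pf_ext (fun y => complex.Re (f y) + complex.Re (g y))) => [y|]; [rewrite ReD|apply: pf_add].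
by apply: (pf_ext (fun y => complex.Im (f y) + complex.Im (g y))) => [y|]; [rewrite ImD|apply: pf_add].
Qed.
Lemma pfc_opp {f} : PFc f -> PFc (fun y => - f y).
Proof.
move=> [h1 h2]; split.
  by apply: (pf_ext (fun y => - complex.Re (f y))) => [y|]; [rewrite ReN|apply: pf_opp].
by apply: (pf_ext (fun y => - complex.Im (f y))) => [y|]; [rewrite ImN|apply: pf_opp].
Qed.
Lemma pfc_mul {f g} : PFc f -> PFc g -> PFc (fun y => f y * g y).
Proof.
move=> [h1 h2] [h3 h4]; split.
  apply: (pf_ext (fun y => complex.Re (f y) * complex.Re (g y) - complex.Im (f y) * complex.Im (g y))).
    by move=> y; rewrite ReM.
  by apply: pf_sub; apply: pf_mul.
apply: (pf_ext (fun y => complex.Re (f y) * complex.Im (g y) + complex.Im (f y) * complex.Re (g y))).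
  by move=> y; rewrite ImM.
by apply: pf_add; apply: pf_mul.
Qed.
Lemma pfc_conj {f} : PFc f -> PFc (fun y => (f y)^*).
Proof.
move=> [h1 h2]; split.
  by apply: (pf_ext (fun y => complex.Re (f y))) => [y|]; [rewrite ReJ|].
by apply: (pf_ext (fun y => - complex.Im (f y))) => [y|]; [rewrite ImJ|apply: pf_opp].
Qed.
Lemma pfc_sum (J : finType) (P : pred J) F :
  (forall j, PFc (F j)) -> PFc (fun y => \sum_(j | P j) F j y).
Proof.
move=> hF; rewrite /PFc; elim: (index_enum J) => [|a r [IH1 IH2]].
  by split; (apply: (pf_ext (fun _ => 0)); [by move=> y; rewrite big_nil | exact: pf_cst]).
have [h1 h2] := hF a.
case Pa: (P a).
  have := pfc_add (hF a) (conj IH1 IH2) => -[k1 k2].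
  by split; [apply: (pf_ext _ _ _ k1)|apply: (pf_ext _ _ _ k2)] => y; rewrite big_cons Pa.
by split; [apply: (pf_ext _ _ _ IH1)|apply: (pf_ext _ _ _ IH2)] => y; rewrite big_cons Pa.
Qed.
Lemma pfc_real a : PF a -> PFc (fun y => ((a y)%:C)%C).
Proof. by move=> h; split => //; apply: pf_cst. Qed.

Lemma pfm_cst A : PFm (fun _ => A). Proof. move=> i j; exact: pfc_cst. Qed.
Lemma pfm_add A B : PFm A -> PFm B -> PFm (fun y => A y + B y).
Proof.
move=> hA hB i j; have := pfc_add (hA i j) (hB i j) => -[k1 k2].
by split; [apply: (pf_ext _ _ _ k1)|apply: (pf_ext _ _ _ k2)] => y; rewrite mxE.
Qed.
Lemma pfm_opp A : PFm A -> PFm (fun y => - A y).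
Proof.
move=> hA i j; have := pfc_opp (hA i j) => -[k1 k2].
by split; [apply: (pf_ext _ _ _ k1)|apply: (pf_ext _ _ _ k2)] => y; rewrite mxE.
Qed.
Lemma pfm_sub A B : PFm A -> PFm B -> PFm (fun y => A y - B y).
Proof. by move=> hA hB; apply: pfm_add => //; apply: pfm_opp. Qed.
Lemma pfm_scale c A : PFc c -> PFm A -> PFm (fun y => c y *: A y).
Proof.
move=> hc hA i j; have := pfc_mul hc (hA i j) => -[k1 k2].
by split; [apply: (pf_ext _ _ _ k1)|apply: (pf_ext _ _ _ k2)] => y; rewrite mxE.
Qed.
Lemma pfm_mul A B : PFm A -> PFm B -> PFm (fun y => A y *m B y).
Proof.
move=> hA hB i j.
have := @pfc_sum _ predT (fun k y => A y i k * B y k j) (fun k => pfc_mul (hA i k) (hB k j)).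
move=> [k1 k2].
by split; [apply: (pf_ext _ _ _ k1)|apply: (pf_ext _ _ _ k2)] => y; rewrite mxE.
Qed.
Lemma pfm_adj A : PFm A -> PFm (fun y => adj (A y)).
Proof.
move=> hA i j; have := pfc_conj (hA j i) => -[k1 k2].
by split; [apply: (pf_ext _ _ _ k1)|apply: (pf_ext _ _ _ k2)] => y; rewrite /adj mxE.
Qed.
Lemma pfm_sum (J : finType) (P : pred J) F :
  (forall j, PFm (F j)) -> PFm (fun y => \sum_(j | P j) F j y).
Proof.
move=> hF i k; have := @pfc_sum J P (fun j y => F j y i k) (fun j => hF j i k) => -[k1 k2].
by split; [apply: (pf_ext _ _ _ k1)|apply: (pf_ext _ _ _ k2)] => y; rewrite summxE.
Qed.
Lemma pfc_tr A : PFm A -> PFc (fun y => \tr (A y)).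
Proof.
move=> hA; have := @pfc_sum _ predT (fun i y => A y i i) (fun i => hA i i) => -[k1 k2].
by split; [apply: (pf_ext _ _ _ k1)|apply: (pf_ext _ _ _ k2)].
Qed.
End Cx.
Arguments pfm_cst {R Y I d n}.
Section Main.
Variables (R : realType) (n K : nat).
Local Notation C := (R[i]).
Local Notation Y := ((R * 'M[C]_n) * ('I_K -> R))%type.
Local Notation d := (@tru_coord R n K).
Local Notation PF := (@polyfun R Y _ d).
Local Notation PFc := (@PFc R Y _ d).
Local Notation PFm := (@PFm R Y _ d n).

Lemma pf_t : PF (fun y => y.1.1).
Proof. exact: (PF_coord d (inl (inl tt))). Qed.
Lemma pf_u k : PF (fun y => y.2 k).
Proof. exact: (PF_coord d (inr k)). Qed.
Lemma pf_mc k : PF (fun y => mat_coord k y.1.2).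
Proof. exact: (PF_coord d (inl (inr k))). Qed.
Lemma pfm_rho : PFm (fun y => y.1.2).
Proof. by move=> i j; split; [exact: (pf_mc (i, j, true)) | exact: (pf_mc (i, j, false))]. Qed.

Lemma mat_coord_lin k (A X : 'M[C]_n) s :
  mat_coord k (A + (s%:C)%C *: X) = mat_coord k A + mat_coord k X * s.
Proof.
case: k => [[i j] b]; rewrite /= !mxE.
case: b; first by rewrite ReD ReM /= mul0r subr0 mulrC.
by rewrite ImD ImM /= mul0r addr0 mulrC.
Qed.

Lemma Dgen (w : R -> 'M[C]_n -> R) a0 (e : R) Xf :
  polyfun (@tr_coord R n) (fun x => w x.1 x.2) -> PF a0 -> PFm Xf ->
  exists Q N, @polyP R Y _ d Q N /\
    forall y s, w (a0 y + s * e) (y.1.2 + (s%:C)%C *: Xf y) = (Q y).[s].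
Proof.
move=> hw ha hX.
have := @poly_comp R Y _ d _ _ (@tr_coord R n) (fun x => w x.1 x.2)
  (fun y s => (a0 y + s * e, y.1.2 + (s%:C)%C *: Xf y))
  (fun j y => (tr_coord j (a0 y, y.1.2))%:P + (tr_coord j (e, Xf y))%:P * 'X)
  (maxn 1 (1 + 2)) hw.
apply.
  move=> j; apply: pP_lin.
    case: j => [[]|k]; first exact: ha.
    exact: pf_mc.
  case: j => [[]|[[i j] b]]; first exact: pf_cst.
  by case: b; have [h1 h2] := hX i j.
move=> j y s; rewrite hornerD hornerC hornerMX hornerC.
case: j => [[]|k] /=; first by rewrite mulrC.
exact: mat_coord_lin.
Qed.


Lemma D1 (w : R -> 'M[C]_n -> R) Xf :
  polyfun (@tr_coord R n) (fun x => w x.1 x.2) -> PFm Xf ->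
  PF (fun y => dderiv (w y.1.1) y.1.2 (Xf y)) /\ PF (fun y => dderiv2 (w y.1.1) y.1.2 (Xf y)).
Proof.
move=> hw hX.
have [Q [N [hp E]]] := Dgen w (fun y => y.1.1) 0 Xf hw pf_t hX.
have key : forall y, (fun s => w y.1.1 (y.1.2 + (s%:C)%C *: Xf y)) = horner (Q y).
  by move=> y; apply: funext => s; rewrite -E mulr0 addr0.
split.
  apply: (pf_ext (fun y => (Q y)^`().[0])).
    by move=> y; rewrite /dderiv key -derivE.
  exact: pP_horner (pP_deriv hp) (pf_cst _).
apply: (pf_ext (fun y => (Q y)^`()^`().[0])).
  by move=> y; rewrite /dderiv2 key -!derivE.
exact: pP_horner (pP_deriv (pP_deriv hp)) (pf_cst _).
Qed.

Lemma Dt (w : R -> 'M[C]_n -> R) :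
  polyfun (@tr_coord R n) (fun x => w x.1 x.2) ->
  PF (fun y => derive1 (fun s => w s y.1.2) y.1.1).
Proof.
move=> hw.
have [Q [N [hp E]]] := Dgen w (fun _ => 0) 1 (fun _ => 0) hw (pf_cst _) (pfm_cst 0).
have key : forall y, (fun s => w s y.1.2) = horner (Q y).
  by move=> y; apply: funext => s; rewrite -E add0r mulr1 scaler0 addr0.
apply: (pf_ext (fun y => (Q y)^`().[y.1.1])).
  by move=> y; rewrite key -derivE.
exact: pP_horner (pP_deriv hp) pf_t.
Qed.

Lemma pf_w (w : R -> 'M[C]_n -> R) (P : 'M[C]_n -> 'M[C]_n) :
  polyfun (@tr_coord R n) (fun x => w x.1 x.2) -> affine_mx P ->
  PF (fun y => w y.1.1 (P y.1.2)).
Proof.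
move=> hw hP.
apply: (@pf_comp R Y _ d _ _ _ _ (fun y => (y.1.1, P y.1.2)) hw).
case=> [[]|[[i j] b]]; first exact: pf_t.
have [h1 h2] := hP i j.
case: b => /=; [move: h1 | move: h2] => /aff_poly hh; exact: (@pf_comp R Y _ d _ _ _ _ (fun y => y.1.2) hh pf_mc).
Qed.

End Main.

Ltac pfm_tac :=
  repeat first
    [ exact: pfm_cst | exact: pfm_rho | exact: pfc_cst | exact: pf_u
    | apply: pfm_add | apply: pfm_opp | apply: pfm_scale | apply: pfm_mul
    | apply: pfm_adj | apply: pfm_sum => ? | apply: pfc_tr | apply: pfc_add
    | apply: pfc_mul | apply: pfc_opp | apply: pfc_conj | apply: pfc_sum => ?
    | apply: pfc_real ].

Section Main2.
Variables (R : realType) (n K L : nat).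
Local Notation Y := ((R * 'M[R[i]]_n) * ('I_K -> R))%type.
Local Notation d := (@tru_coord R n K).

Lemma pfm_Lt (H0 : 'M[R[i]]_n) (H : 'I_K -> 'M[R[i]]_n) (sigma : 'I_L -> 'M[R[i]]_n) (PC : {set 'I_L}) :
  @PFm R Y _ d n (fun y : Y => Ltilde H0 H sigma PC y.2 y.1.2).
Proof. rewrite /Ltilde /Lgen /Hu /comm /acomm /Ljump /lam. pfm_tac. Qed.

Lemma pfm_G (s : 'M[R[i]]_n) : @PFm R Y _ d n (fun y : Y => Gop s y.1.2).
Proof. rewrite /Gop. pfm_tac. Qed.

Lemma pf_lam (s : 'M[R[i]]_n) : polyfun d (fun y : Y => complex.Re (lam s y.1.2)).
Proof. have : @PFc R Y _ d (fun y : Y => lam s y.1.2) by rewrite /lam; pfm_tac. by case. Qed.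
End Main2.
Theorem lemma3 (R : realType) (n K L : nat) (hn : (0 < n)%N) (hK : (0 < K)%N)
    (H0 : 'M[R[i]]_n) (H : 'I_K -> 'M[R[i]]_n)
    (hH0 : is_hermitian H0) (hH : forall k, is_hermitian (H k))
    (sigma : 'I_L -> 'M[R[i]]_n) (PC : {set 'I_L})
    (hPC : forall l, l \in PC ->
       exists P : 'M[R[i]]_n -> 'M[R[i]]_n, affine_mx P /\
         forall rho, is_density rho -> lam (sigma l) rho != 0 ->
           hmap (sigma l) rho = P rho)
    (w : R -> 'M[R[i]]_n -> R)
    (hw : polyfun (@tr_coord R n) (fun x => w x.1 x.2)) :
  exists q : (R * 'M[R[i]]_n) * ('I_K -> R) -> R,
    polyfun (@tru_coord R n K) q /\
    forall t rho u, is_density rho ->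
      gen H0 H sigma PC w t rho u = q ((t, rho), u).
Proof.
pose Y := ((R * 'M[R[i]]_n) * ('I_K -> R))%type.
have hJ : forall l, exists q : Y -> R, polyfun (@tru_coord R n K) q /\
   (l \in PC -> forall t rho u, is_density rho ->
      complex.Re (lam (sigma l) rho) * (w t (hmap (sigma l) rho) - w t rho)
      = q ((t, rho), u)).
  move=> l; have [lPC|nlPC] := boolP (l \in PC); last first.
    by exists (fun _ => 0); split; [exact: pf_cst | done].
  have [P [hP eP]] := hPC l lPC.
  exists (fun y : Y => complex.Re (lam (sigma l) y.1.2) * (w y.1.1 (P y.1.2) - w y.1.1 y.1.2)).
  split.
    apply: pf_mul; first exact: (@pf_lam R n K (sigma l)).
    apply: pf_sub; first exact: (@pf_w R n K w P hw hP).
    exact: (@pf_comp R Y _ (@tru_coord R n K) _ _ _ _ (fun y : Y => y.1) hw (fun j => PF_coord _ (inl j))).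
  move=> _ t rho u hrho /=.
  have [->|nz] := eqVneq (lam (sigma l) rho) 0; first by rewrite !mul0r.
  by rewrite (eP rho hrho nz).
have [qf hqf] := choice hJ.
exists (fun y : Y => derive1 (fun s => w s y.1.2) y.1.1
  + dderiv (w y.1.1) y.1.2 (Ltilde H0 H sigma PC y.2 y.1.2)
  + 2%:R^-1 * \sum_(l in ~: PC) dderiv2 (w y.1.1) y.1.2 (Gop (sigma l) y.1.2)
  + \sum_(l in PC) qf l y).
split.
  apply: pf_add; last by apply: pf_sum => l; case: (hqf l).
  apply: pf_add; last first.
    apply: pf_mul; first exact: pf_cst.
    apply: pf_sum => l; exact: (@D1 R n K w _ hw (@pfm_G R n K (sigma l))).2.
  apply: pf_add; first exact: (@Dt R n K w hw).
  exact: (@D1 R n K w _ hw (@pfm_Lt R n K L H0 H sigma PC)).1.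
move=> t rho u hrho; rewrite /gen /=; congr (_ + _).
by apply: eq_bigr => l lPC; case: (hqf l) => _ h; rewrite (h lPC t rho u hrho).
Qed.
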